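(* Let $G=(V,E)$ be an $S$-regular graph with cells $V_1,\dots,V_k$, $n_i=|V_i|$, and let $B,C\subseteq V$, with $B_i=B\cap V_i$, $C_j=C\cap V_j$. Then \[\Bigl|\,|E(B,C)|-\sum_{i=1}^k\sum_{j=1}^k\sqrt{\tfrac{s_{ij}s_{ji}}{n_in_j}}\,|B_i||C_j|\,\Bigr|\le\lambda_B\sqrt{|B||C|}.\]
   Context: All graphs are simple, undirected and connected. $G$ is $S$-regular ($S=(s_{ij})$ a $k\times k$ nonnegative integer matrix) if $V$ is partitioned into nonempty cells $V_1,\dots,V_k$ such that every vertex of $V_i$ has exactly $s_{ij}$ neighbours in $V_j$. $|E(B,C)|$ denotes the number of pairs $(u,v)\in B\times C$ with $uv\in E$ (i.e. $\mathbf{1}_B^TA\mathbf{1}_C$, $A$ the adjacency matrix). The subspace $W=\mathrm{span}\{\mathbf{1}_{V_1},\dots,\mathbf{1}_{V_k}\}$ is $A$-invariant with eigenvalues on $W$ equal to those of $S$; the eigenvalues of $A$ on $W^\perp$ are the bulk eigenvalues (assume $|V|>k$), and $\lambda_B$ is the largest absolute value of a bulk eigenvalue. *)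

(* Defs.v *)
From HB Require Import structures.
From mathcomp Require Import all_boot all_order all_algebra.
Set Implicit Arguments. Unset Strict Implicit. Unset Printing Implicit Defensive.
Import Order.TTheory GRing.Theory Num.Theory.
Local Open Scope ring_scope.

Definition simple_graph (n : nat) (adj : rel 'I_n) : Prop :=
  symmetric adj /\ irreflexive adj.

Definition connected_graph (n : nat) (adj : rel 'I_n) : Prop :=
  forall u v : 'I_n, connect adj u v.

Definition cellset (n k : nat) (cell : 'I_n -> 'I_k) (i : 'I_k) : {set 'I_n} :=
  [set v | cell v == i].

Definition S_regular (n k : nat) (adj : rel 'I_n) (cell : 'I_n -> 'I_k)
    (S : 'I_k -> 'I_k -> nat) : Prop :=
  (forall i : 'I_k, cellset cell i != set0) /\
  (forall (v : 'I_n) (j : 'I_k),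
      #|[set w | adj v w & w \in cellset cell j]| = S (cell v) j).

Definition adjmx (R : nzRingType) (n : nat) (adj : rel 'I_n) : 'M[R]_n :=
  \matrix_(u < n, v < n) (adj u v)%:R.

Definition indic (R : nzRingType) (n : nat) (X : {set 'I_n}) : 'cV[R]_n :=
  \col_(v < n) (v \in X)%:R.

Definition in_Wperp (R : nzRingType) (n k : nat) (cell : 'I_n -> 'I_k)
    (x : 'cV[R]_n) : Prop :=
  forall i : 'I_k, (indic R (cellset cell i))^T *m x = 0.

Definition bulk_eigenvalue (R : nzRingType) (n k : nat) (adj : rel 'I_n)
    (cell : 'I_n -> 'I_k) (mu : R) : Prop :=
  exists2 x : 'cV[R]_n, x != 0 /\ in_Wperp cell x &
    adjmx R adj *m x = mu *: x.

Definition is_lambda_B (R : numDomainType) (n k : nat) (adj : rel 'I_n)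
    (cell : 'I_n -> 'I_k) (lam : R) : Prop :=
  (exists2 mu : R, bulk_eigenvalue adj cell mu & `|mu| = lam) /\
  (forall mu : R, bulk_eigenvalue adj cell mu -> `|mu| <= lam).

(* |E(B,C)| = number of ordered pairs (u,v) in B x C with uv an edge. *)
Definition EBC (n : nat) (adj : rel 'I_n) (B C : {set 'I_n}) : nat :=
  #|[set p : 'I_n * 'I_n | [&& p.1 \in B, p.2 \in C & adj p.1 p.2]]|.

(* Main.v *)
Require Import Defs.
Set Warnings "-all".
From HB Require Import structures.
From mathcomp Require Import all_boot all_order all_algebra.
From mathcomp Require Import complex.
From mathcomp Require Import ring lra.
Set Implicit Arguments. Unset Strict Implicit. Unset Printing Implicit Defensive.
Import Order.TTheory GRing.Theory Num.Theory.
Local Open Scope ring_scope.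
Definition bil (R : comPzRingType) n (M : 'M[R]_n) (a b : 'rV[R]_n) : R :=
  (a *m M *m b^T) 0 0.

Section Bil.
Variables (R : rcfType) (n : nat).
Implicit Types (M : 'M[R]_n) (a b c : 'rV[R]_n).

Lemma bilDl M a b c : bil M (a + b) c = bil M a c + bil M b c.
Proof. by rewrite /bil !mulmxDl mxE. Qed.
Lemma bilDr M a b c : bil M a (b + c) = bil M a b + bil M a c.
Proof. by rewrite /bil linearD /= mulmxDr mxE. Qed.
Lemma bilZl M k a b : bil M (k *: a) b = k * bil M a b.
Proof. by rewrite /bil -!scalemxAl mxE. Qed.
Lemma bilZr M k a b : bil M a (k *: b) = k * bil M a b.
Proof. by rewrite /bil linearZ /= -scalemxAr mxE. Qed.
Lemma bil_sym M a b : M^T = M -> bil M a b = bil M b a.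
Proof.
move=> sM; have h : (a *m M *m b^T)^T = b *m M *m a^T.
  by rewrite !trmx_mul trmxK sM mulmxA.
by rewrite /bil -h [in RHS]mxE.
Qed.
Lemma bil_eigl M mu a b : a *m M = mu *: a -> bil M a b = mu * bil 1%:M a b.
Proof. by rewrite /bil mulmx1 => ->; rewrite -scalemxAl mxE. Qed.
Lemma bil_eigr M mu a b : M^T = M -> b *m M = mu *: b ->
  bil M a b = mu * bil 1%:M a b.
Proof.
move=> sM hb; rewrite bil_sym // (bil_eigl _ hb) bil_sym //.
by rewrite trmx1.
Qed.
Lemma bil1E a : bil 1%:M a a = \sum_i a 0 i ^+ 2.
Proof. by rewrite /bil mulmx1 mxE; apply: eq_bigr => i _; rewrite mxE. Qed.
Lemma bil1_ge0 a : 0 <= bil 1%:M a a.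
Proof. by rewrite bil1E sumr_ge0 // => i _; rewrite sqr_ge0. Qed.
Lemma bil1_eq0 a : bil 1%:M a a = 0 -> a = 0.
Proof.
rewrite bil1E => h; apply/rowP => i; rewrite mxE.
have := (@psumr_eq0P _ _ predT (fun i => a 0 i ^+ 2)) (fun i _ => sqr_ge0 _) h i isT.
by move/eqP; rewrite sqrf_eq0 => /eqP.
Qed.
End Bil.
Lemma sym_eigvec (R : rcfType) (n m : nat) (A : 'M[R]_n) (U : 'M[R]_(m, n)) :
  A^T = A -> (U *m A <= U)%MS -> \rank U != 0%N ->
  exists2 v : 'rV[R]_n, (v != 0) && (v <= U)%MS & exists mu, v *m A = mu *: v.
Proof.
move=> sA stU rU.
pose Bm := row_base U.
pose M := conjmx Bm A.
have hB : Bm *m A = M *m Bm.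
  by rewrite /M /conjmx mulmxKpV // stablemx_row_base.
pose toC := real_complex R.
have rU0 : (0 < \rank U)%N by rewrite lt0n.
have [z ez] := eigenvalue_closed (map_mx toC M) rU0.

have [w wM w0] := eigenvalueP ez.
pose W := w *m map_mx toC Bm.
have W0 : W != 0.
  by rewrite /W mul_mx_rowfree_eq0 // row_free_map row_base_free.
have WA : W *m map_mx toC A = z *: W.
  by rewrite /W -mulmxA -map_mxM hB map_mxM mulmxA wM scalemxAl.
pose Ac := map_mx toC A.
have hAc : forall i j, ((Ac i j)^*)%C = Ac i j by move=> i j; rewrite mxE conjc_real.
have hAs : forall i j, Ac j i = Ac i j by move=> i j; rewrite !mxE -{1}sA mxE.
rewrite -/Ac in WA; clearbody W Ac.
have h1 : forall j, \sum_i W 0 i * Ac i j = z * W 0 j.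
  by move=> j; have := WA; move/rowP/(_ j); rewrite !mxE /= => ->.
pose N := \sum_j W 0 j * (W 0 j)^*%C.
pose s := \sum_j \sum_i W 0 i * Ac i j * (W 0 j)^*%C.
have hs : s = z * N.
  rewrite /s /N mulr_sumr; apply: eq_bigr => j _.
  by rewrite -mulr_suml h1 mulrA.
have hsc : (s^*)%C = s.
  rewrite /s rmorph_sum /= exchange_big /=; apply: eq_bigr => j _.
  rewrite rmorph_sum; apply: eq_bigr => i _ /=.
  rewrite !rmorphM /= conjcK hAc hAs.
  by ring.
have hNc : (N^*)%C = N.
  rewrite /N rmorph_sum; apply: eq_bigr => j _.
  by rewrite rmorphM /= conjcK mulrC.
have N0 : N != 0.
  apply/eqP => HN; move/eqP: W0; apply; apply/rowP => j; rewrite mxE.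
  have hnn : forall i : 'I_n, predT i -> 0 <= W 0 i * (W 0 i)^*%C.
    by move=> i _; rewrite -sqr_normc exprn_ge0.
  have := (@psumr_eq0P _ _ predT (fun j => W 0 j * (W 0 j)^*%C)) hnn HN j isT.
  by move=> /eqP; rewrite -sqr_normc sqrf_eq0 normr_eq0 => /eqP.
have zr : (z^*)%C = z.
  apply: (mulIf N0); rewrite -hs -hNc -rmorphM /= -hs hsc.
  done.
have [a za] : exists a, z = toC a.
  move: zr; case: (z) => a b /eqP; rewrite eq_complex /= => /andP [_ /eqP hb].
  have hb0 : b = 0 by lra.
  by exists a; rewrite hb0.
rewrite za eigenvalue_root_char -map_char_poly fmorph_root -eigenvalue_root_char in ez.
have [u uM u0] := eigenvalueP ez.
exists (u *m Bm).
  rewrite mul_mx_rowfree_eq0 ?row_base_free // u0 /=.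
  by rewrite (submx_trans (submxMl _ _)) // eq_row_base.
by exists a; rewrite -mulmxA hB mulmxA uM scalemxAl.
Qed.

Lemma real_ineq (R : rcfType) (F mu L a b p q s nx ny : R) :
  0 <= L -> `|F| <= L * p * q -> `|mu| <= L -> 0 <= p -> 0 <= q -> 0 <= s ->
  0 <= nx -> 0 <= ny -> nx ^+ 2 = p ^+ 2 + a ^+ 2 * s ^+ 2 ->
  ny ^+ 2 = q ^+ 2 + b ^+ 2 * s ^+ 2 ->
  `|F + a * b * mu * s ^+ 2| <= L * nx * ny.
Proof.
move=> L0 hF hmu p0 q0 s0 nx0 ny0 hx hy.
have st1 : `|F + a * b * mu * s ^+ 2| <= L * (p * q + `|a| * `|b| * s ^+ 2).
  apply: (le_trans (ler_normD _ _)).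
  have hX : `|a * b * mu * s ^+ 2| = `|a| * `|b| * `|mu| * s ^+ 2.
    by rewrite normrM (ger0_norm (sqr_ge0 s)) !normrM.
  rewrite hX.
  have h0 : 0 <= `|a| * `|b| * s ^+ 2 * (L - `|mu|).
    by rewrite !mulr_ge0 ?sqr_ge0 // subr_ge0.
  nra.
apply: (le_trans st1); rewrite -(mulrA L nx ny); apply: ler_wpM2l => //.
set t := _ + _.
have t0 : 0 <= t by rewrite /t addr_ge0 ?mulr_ge0 ?sqr_ge0.
have ht : t ^+ 2 <= (nx * ny) ^+ 2.
  rewrite exprMn hx hy /t.
  have : 0 <= s ^+ 2 * (p * `|b| - q * `|a|) ^+ 2 by rewrite mulr_ge0 ?sqr_ge0.
  rewrite -[a ^+ 2](real_normK (num_real a)) -[b ^+ 2](real_normK (num_real b)).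
  move=> h; nra.
rewrite -ler_sqr ?nnegrE ?mulr_ge0 //.
Qed.

Lemma sym_bound (R : rcfType) n (A : 'M[R]_n) (L : R) :
  A^T = A -> 0 <= L ->
  forall m (U : 'M[R]_(m, n)), (U *m A <= U)%MS ->
  (forall (v : 'rV_n) mu, v != 0 -> (v <= U)%MS -> v *m A = mu *: v -> `|mu| <= L) ->
  forall x y : 'rV_n, (x <= U)%MS -> (y <= U)%MS ->
  `|bil A x y| <= L * Num.sqrt (bil 1%:M x x) * Num.sqrt (bil 1%:M y y).
Proof.
move=> sA L0 m U.
have [r] := ubnP (\rank U); elim: r m U => // r IH m U hr stU hev x y xU yU.
have [r0|rn0] := eqVneq (\rank U) 0%N.
  have z0 : forall a : 'rV_n, (a <= U)%MS -> a = 0.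
    by move=> a aU; apply/eqP; have := mxrankS aU; rewrite r0 leqn0 mxrank_eq0.
  rewrite (z0 x xU).
  by rewrite /bil !mul0mx mxE normr0 !mulr_ge0 ?sqrtr_ge0.
have [v /andP [v0 vU] [mu hv]] := sym_eigvec sA stU rn0.
pose U' := (U :&: kermx v^T)%MS.
have U'U : (U' <= U)%MS := capmxSl _ _.
have U'k : (U' <= kermx v^T)%MS := capmxSr _ _.
have Av : A *m v^T = mu *: v^T.
  by rewrite -{1}sA -trmx_mul hv linearZ.
have stU' : (U' *m A <= U')%MS.
  rewrite sub_capmx (submx_trans (submxMr _ U'U) stU) /=.
  apply/sub_kermxP; rewrite -mulmxA Av -scalemxAr.
  by move/sub_kermxP: U'k => ->; rewrite scaler0.
have Nv : 0 < bil 1%:M v v.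
  rewrite lt_def bil1_ge0 andbT; apply/eqP => h; move/eqP: v0; apply; exact: bil1_eq0 h.
have e1 : forall a, (a *m v^T) 0 0 = bil 1%:M a v by move=> a; rewrite /bil mulmx1.
have vnU' : ~~ (v <= U')%MS.
  apply/negP => /submx_trans/(_ U'k)/sub_kermxP h.
  have : bil 1%:M v v = 0 by rewrite -e1 h mxE.
  by move=> e; rewrite e ltxx in Nv.
have lt : (U' < U)%MS.
  by rewrite ltmxEneq U'U /=; apply: contra vnU' => /(submx_trans vU).
have hr' : (\rank U' < r)%N := leq_trans (rank_ltmx lt) hr.
have hev' : forall (v' : 'rV_n) mu', v' != 0 -> (v' <= U')%MS -> v' *m A = mu' *: v' -> `|mu'| <= L.
  by move=> v' mu' h1 h2 h3; apply: hev h1 (submx_trans h2 U'U) h3.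
set N := bil 1%:M v v.
have N0 : N != 0 by rewrite gt_eqF.
have sym1 : forall a b : 'rV[R]_n, bil 1%:M a b = bil 1%:M b a.
  by move=> a b; rewrite bil_sym // trmx1.
have dec : forall a : 'rV_n, (a <= U)%MS -> exists al, exists2 a',
    (a' <= U')%MS & a = a' + al *: v.
  move=> a aU; exists (bil 1%:M a v / N); exists (a + (- (bil 1%:M a v / N)) *: v).
    rewrite sub_capmx; apply/andP; split.
      by rewrite addmx_sub // scalemx_sub.
    apply/sub_kermxP; apply/matrixP => i j; rewrite !ord1 [in RHS]mxE e1.
    by rewrite bilDl bilZl -/N; field.
  by rewrite -addrA -scalerDl addNr scale0r addr0.
have [al [x' x'U' ->]] := dec x xU.
have [be [y' y'U' ->]] := dec y yU.
have ox : bil 1%:M x' v = 0.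
  by rewrite -e1; move/sub_kermxP: (submx_trans x'U' U'k) => ->; rewrite mxE.
have oy : bil 1%:M y' v = 0.
  by rewrite -e1; move/sub_kermxP: (submx_trans y'U' U'k) => ->; rewrite mxE.
have eA : bil A (x' + al *: v) (y' + be *: v) =
    bil A x' y' + al * be * mu * Num.sqrt N ^+ 2.
  rewrite sqr_sqrtr ?ltW // !bilDl !bilDr !bilZl !bilZr.
  rewrite (@bil_eigr _ _ A mu x' v sA hv) (@bil_eigl _ _ A mu v y' hv) (@bil_eigl _ _ A mu v v hv) ox (sym1 v y') oy -/N.
  ring.
have ex : forall (a' : 'rV_n) k, bil 1%:M a' v = 0 ->
    Num.sqrt (bil 1%:M (a' + k *: v) (a' + k *: v)) ^+ 2 =
    Num.sqrt (bil 1%:M a' a') ^+ 2 + k ^+ 2 * Num.sqrt N ^+ 2.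
  move=> a' k ha; rewrite !sqr_sqrtr ?bil1_ge0 ?ltW //.
  rewrite !bilDl !bilDr !bilZl !bilZr ha sym1 ha -/N; ring.
rewrite eA; apply: (@real_ineq R _ mu L al be (Num.sqrt (bil 1%:M x' x'))
   (Num.sqrt (bil 1%:M y' y')) (Num.sqrt N)); rewrite ?sqrtr_ge0 ?ex //.
  exact: (IH _ U' hr' stU' hev' x' y' x'U' y'U').
by apply: (hev v mu v0 vU hv).
Qed.

Lemma card_sumR (R : nzRingType) (T : finType) (P : pred T) :
  (#|[set x | P x]|%:R : R) = \sum_x (P x)%:R.
Proof.
rewrite -sum1_card natr_sum big_mkcond /=; apply: eq_bigr => x _.
by rewrite inE; case: (P x).
Qed.

Theorem mainTheorem10 (R : rcfType) (n k : nat) (adj : rel 'I_n)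
    (cell : 'I_n -> 'I_k) (S : 'I_k -> 'I_k -> nat) (lamB : R)
    (B C : {set 'I_n}) :
  simple_graph adj -> connected_graph adj ->
  S_regular adj cell S ->
  (k < n)%N ->
  is_lambda_B adj cell lamB ->
  `| (EBC adj B C)%:R -
     \sum_(i < k) \sum_(j < k)
        Num.sqrt ((S i j * S j i)%:R /
                  (#|cellset cell i| * #|cellset cell j|)%:R)
        * #|B :&: cellset cell i|%:R * #|C :&: cellset cell j|%:R |
  <= lamB * Num.sqrt (#|B|%:R * #|C|%:R).
Proof.
move=> [symA _] _ [ne reg] _ [[mu0 _ hmu0] hlam].
set A := adjmx R adj.
have sA : A^T = A by apply/matrixP => u v; rewrite !mxE symA.
have L0 : 0 <= lamB by rewrite -hmu0 normr_ge0.
pose nc i := #|cellset cell i|.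
have nc0 : forall i, (nc i)%:R != 0 :> R.
  by move=> i; rewrite pnatr_eq0 -lt0n card_gt0 ne.
pose Wm : 'M[R]_(n, k) := \matrix_(v, i) (cell v == i)%:R.
pose Smx : 'M[R]_k := \matrix_(i, j) (S i j)%:R.
have sumW : forall (f : 'I_k -> R) v, \sum_i f i * (cell v == i)%:R = f (cell v).
  move=> f v; rewrite (bigD1 (cell v)) //= eqxx mulr1 big1 ?addr0 // => i hi.
  by rewrite eq_sym (negbTE hi) mulr0.
have cnt : forall (X : {set 'I_n}) j,
    \sum_v (v \in X)%:R * (cell v == j)%:R = #|X :&: cellset cell j|%:R :> R.
  move=> X j.
  have -> : X :&: cellset cell j = [set v | (v \in X) && (cell v == j)].
    by apply/setP => v; rewrite !inE.
  by rewrite card_sumR; apply: eq_bigr => v _; rewrite -natrM mulnb.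
have AW : A *m Wm = Wm *m Smx.
  apply/matrixP => v j; rewrite !mxE.
  under [RHS]eq_bigr do rewrite !mxE mulrC.
  rewrite sumW -reg card_sumR; apply: eq_bigr => w _.
  by rewrite !mxE inE -natrM mulnb.
pose ind (X : {set 'I_n}) : 'rV[R]_n := \row_v (v \in X)%:R.
pose pr (X : {set 'I_n}) : 'rV[R]_k :=
  \row_i (#|X :&: cellset cell i|%:R / (nc i)%:R).
have indW : forall X, ind X *m Wm = \row_j #|X :&: cellset cell j|%:R.
  move=> X; apply/rowP => j; rewrite !mxE -cnt; apply: eq_bigr => v _.
  by rewrite !mxE.
have WmE : forall (v : 'I_n) (f : 'rV[R]_k), (f *m Wm^T) 0 v = f 0 (cell v).
  move=> v f; rewrite mxE -sumW; apply: eq_bigr => i _; by rewrite !mxE.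
have prW : forall X, pr X *m Wm^T *m Wm = \row_j #|X :&: cellset cell j|%:R.
  move=> X; apply/rowP => j; rewrite !mxE.
  under eq_bigr do rewrite WmE [Wm _ _]mxE.
  transitivity (\sum_v pr X 0 j * (cell v == j)%:R).
    apply: eq_bigr => v _; case: eqP => [->|]; by rewrite ?mulr0.
  rewrite -mulr_sumr.
  have -> : \sum_v (cell v == j)%:R = (nc j)%:R :> R by rewrite /nc /cellset card_sumR.
  by rewrite mxE divfK.
have perp : forall X, (ind X - pr X *m Wm^T) *m Wm = 0.
  by move=> X; rewrite mulmxBl indW prW subrr.
have stab : (kermx Wm *m A <= kermx Wm)%MS.
  by apply/sub_kermxP; rewrite -mulmxA AW mulmxA mulmx_ker mul0mx.
have hev : forall (v : 'rV_n) mu, v != 0 -> (v <= kermx Wm)%MS ->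
    v *m A = mu *: v -> `|mu| <= lamB.
  move=> v mu v0 /sub_kermxP vW hv; apply: hlam; exists v^T.
    split; first by rewrite trmx_eq0.
    move=> i; apply/matrixP => a b; rewrite !ord1 !mxE.
    transitivity ((v *m Wm) 0 i); last by rewrite vW mxE.
    by rewrite mxE; apply: eq_bigr => u _; rewrite !mxE /cellset inE mulrC.
  by rewrite -/A -sA -trmx_mul hv linearZ.
pose b' := ind B - pr B *m Wm^T.
pose c' := ind C - pr C *m Wm^T.
have bK : (b' <= kermx Wm)%MS by apply/sub_kermxP; exact: perp.
have cK : (c' <= kermx Wm)%MS by apply/sub_kermxP; exact: perp.
have bnd := sym_bound sA L0 stab hev bK cK.
have cr : forall X (y : 'rV_n), y *m Wm = 0 -> bil A y (pr X *m Wm^T) = 0.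
  move=> X y hy; rewrite /bil trmx_mul trmxK !mulmxA -(mulmxA y) AW mulmxA hy.
  by rewrite !mul0mx mxE.
have cr1 : forall X (y : 'rV_n), y *m Wm = 0 -> bil 1%:M y (pr X *m Wm^T) = 0.
  move=> X y hy; rewrite /bil mulmx1 trmx_mul trmxK mulmxA hy.
  by rewrite !mul0mx mxE.
have nrm : forall X y, y = ind X - pr X *m Wm^T -> bil 1%:M y y <= #|X|%:R.
  move=> X y hy.
  have hX : ind X = y + pr X *m Wm^T by rewrite hy subrK.
  have yW : y *m Wm = 0 by rewrite hy perp.
  clear hy.
  have -> : (#|X|%:R : R) = bil 1%:M (ind X) (ind X).
    rewrite bil1E; transitivity (\sum_v ((v \in X)%:R : R)).
      rewrite -card_sumR; congr (_%:R); apply: eq_card => v; by rewrite inE.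
    by apply: eq_bigr => v _; rewrite mxE; case: (v \in X); rewrite ?expr0n ?expr1n.
  rewrite hX !bilDl !bilDr (@bil_sym R n 1%:M (pr X *m Wm^T) y (trmx1 _ _)) !(cr1 X y yW).
  by rewrite !addr0 lerDl add0r; apply: bil1_ge0.
have nb := nrm B b' erefl.
have nc' := nrm C c' erefl.
have hb : ind B = b' + pr B *m Wm^T by rewrite subrK.
have hc : ind C = c' + pr C *m Wm^T by rewrite subrK.
have b'W : b' *m Wm = 0 by apply: perp.
have c'W : c' *m Wm = 0 by apply: perp.
clearbody b' c'.
have spl : bil A (ind B) (ind C) = bil A b' c' + bil A (pr B *m Wm^T) (pr C *m Wm^T).
  rewrite hb hc !bilDl !bilDr (@bil_sym R n A (pr B *m Wm^T) c' sA) (cr C b' b'W) (cr B c' c'W).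
  by rewrite addr0 add0r.
have eE : (EBC adj B C)%:R = bil A (ind B) (ind C).
  rewrite /EBC card_sumR.
  rewrite -(pair_bigA _ (fun u v => ([&& u \in B, v \in C & adj u v])%:R)) /=.
  rewrite /bil mxE exchange_big /=.
  apply: eq_bigr => v _; rewrite mxE mulr_suml; apply: eq_bigr => u _.
  have bb : forall a b c : bool, ([&& a, b & c]%:R : R) = a%:R * c%:R * b%:R.
    by case; case; case; rewrite /= ?mul0r ?mulr0 ?mul1r ?mulr1.
  by rewrite !mxE bb.
have WS : forall v j, (Wm *m Smx) v j = (S (cell v) j)%:R.
  move=> v j; rewrite mxE; under eq_bigr do rewrite !mxE mulrC.
  exact: sumW.
have XE : forall i j, (Wm^T *m A *m Wm) i j = (nc i)%:R * (S i j)%:R.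
  move=> i j; rewrite -mulmxA AW mxE.
  under eq_bigr do rewrite WS [Wm^T _ _]mxE [Wm _ _]mxE.
  transitivity (\sum_v (S i j)%:R * ((cell v == i)%:R : R)).
    by apply: eq_bigr => v _; case: eqP => [->|]; rewrite ?mulr0 ?mul0r // mulrC.
  rewrite -mulr_sumr mulrC; congr (_ * _).
  by rewrite /nc /cellset card_sumR.
have rel : forall i j, (nc i)%:R * (S i j)%:R = (nc j)%:R * (S j i)%:R :> R.
  move=> i j; rewrite -!XE.
  have h : (Wm^T *m A *m Wm)^T = Wm^T *m A *m Wm.
    by rewrite !trmx_mul trmxK sA mulmxA.
  by rewrite -[in LHS]h mxE.
have sq : forall i j, Num.sqrt ((S i j * S j i)%:R /
       (#|cellset cell i| * #|cellset cell j|)%:R) = (S i j)%:R / (nc j)%:R :> R.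
  move=> i j.
  have hS : (S j i)%:R = (nc i)%:R * (S i j)%:R / (nc j)%:R :> R.
    rewrite rel; field; exact: nc0.
  rewrite !natrM hS -/(nc i) -/(nc j).
  have -> : (S i j)%:R * ((nc i)%:R * (S i j)%:R / (nc j)%:R) / ((nc i)%:R * (nc j)%:R)
      = ((S i j)%:R / (nc j)%:R) ^+ 2 :> R.
    by field; rewrite ?nc0.
  by rewrite sqrtr_sqr ger0_norm // divr_ge0.
have mainE : bil A (pr B *m Wm^T) (pr C *m Wm^T) =
   \sum_(i < k) \sum_(j < k)
        Num.sqrt ((S i j * S j i)%:R /
                  (#|cellset cell i| * #|cellset cell j|)%:R)
        * #|B :&: cellset cell i|%:R * #|C :&: cellset cell j|%:R.
  have h : pr B *m Wm^T *m A *m (pr C *m Wm^T)^T =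
      pr B *m (Wm^T *m A *m Wm) *m (pr C)^T.
    by rewrite trmx_mul trmxK !mulmxA.
  rewrite /bil h mxE.
  under eq_bigr do rewrite [(pr B *m _) _ _]mxE mulr_suml.
  rewrite exchange_big /=; apply: eq_bigr => i _; apply: eq_bigr => j _.
  rewrite XE sq !mxE; field; rewrite ?nc0 //.
rewrite eE spl mainE addrK.
apply: (le_trans bnd).
rewrite sqrtrM ?ler0n // mulrA.
apply: ler_pM; first by rewrite mulr_ge0 ?sqrtr_ge0.
- exact: sqrtr_ge0.
- apply: ler_pM => //; [exact: sqrtr_ge0 | exact: ler_wsqrtr].
- exact: ler_wsqrtr.
Qed.
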